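(* Let $d\geq 1$, $n\geq 1$ and $1\leq a\leq d+1$ be integers. Then $$\sum_{\pi\in \mathcal F_d^{(a)}(n)}\lambda(\pi)-\sum_{\pi\in \mathcal H_d^{(a)}(n)}\lambda(\pi)=\sum_{m=1}^{n-1} f_d^{(a)}(n-m)\,f_d^{(1)}(m)-\sum_{m=1}^{n-1} f_d^{(a)}(n-m)\,f_d^{(d+1)}(m).$$ Equivalently, $\sum_{n\geq1}\Big(\sum_{\pi\in \mathcal F_d^{(a)}(n)}\lambda(\pi)-\sum_{\pi\in \mathcal H_d^{(a)}(n)}\lambda(\pi)\Big)q^n=\dfrac{q^{a+1}-q^{a+1+d}}{(1-q-q^{d+1})^2}$.
   Context: A partition is a finite nonincreasing sequence of positive integers (its parts); its size is not fixed. For a partition $\pi$, $\lambda(\pi)$ is its number of parts, $\alpha(\pi)$ its largest part, and its perimeter is $\alpha(\pi)+\lambda(\pi)-1$. A partition has $d$-distinct parts if any two of its parts differ by at least $d$. For $1\le b\le d+1$, $\mathcal F_d^{(b)}(n)$ is the set of partitions of perimeter $n$ all of whose parts are $\equiv b \pmod{d+1}$, and $f_d^{(b)}(n)=|\mathcal F_d^{(b)}(n)|$. $\mathcal H_d^{(a)}(n)$ is the set of partitions of perimeter $n$ whose parts are $d$-distinct and all $\geq a$. (The paper writes the right-hand side as $fp^{(a,1)}(n)-fp^{(a,d+1)}(n)$ where $fp^{(a,b)}(n)$ counts ordered pairs $(\pi_1,\pi_2)$ with $\pi_1\in\mathcal F_d^{(a)}(n-m)$, $\pi_2\in\mathcal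 F_d^{(b)}(m)$ for some $1\le m\le n-1$.) *)

(* Defs.v *)
From mathcomp Require Import all_boot all_order all_algebra.
Set Implicit Arguments. Unset Strict Implicit. Unset Printing Implicit Defensive.

Definition is_partition (s : seq nat) : bool :=
  sorted geq s && all (fun x => 0 < x) s.

Definition nparts (s : seq nat) : nat := size s.
Definition largest (s : seq nat) : nat := foldr maxn 0 s.
Definition perimeter (s : seq nat) : nat := largest s + nparts s - 1.

Definition d_distinct (d : nat) (s : seq nat) : bool :=
  pairwise (fun x y => d + y <= x) s.

(* Candidate sequences: all sequences of length <= k with entries in 1..n,
   each listed exactly once.  Every partition of perimeter n has at most
   n parts, all <= n, so it occurs in cand n n. *)
Fixpoint cand (n k : nat) : seq (seq nat) :=
  match k with
  | 0 => [:: [::]]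
  | k'.+1 => [::] :: [seq x :: s | x <- iota 1 n, s <- cand n k']
  end.

Definition Fset (d b n : nat) : seq (seq nat) :=
  [seq s <- cand n n | [&& is_partition s, perimeter s == n &
                          all (fun x => x %% d.+1 == b %% d.+1) s]].
Definition fcount (d b n : nat) : nat := size (Fset d b n).

Definition Hset (d a n : nat) : seq (seq nat) :=
  [seq s <- cand n n | [&& is_partition s, perimeter s == n,
                          d_distinct d s & all (fun x => a <= x) s]].

(* Main.v *)
Require Import Defs.
From mathcomp Require Import all_boot all_order all_algebra zify ring.

Lemma mem_cand N k s : (s \in cand N k) = (size s <= k) && all (fun x => 0 < x <= N) s.
Proof.
elim: k s => [|k IH] [|x t] //=.
rewrite in_cons /=.
apply/allpairsP/idP => [[[y u] [/= Hy Hu [-> ->]]]|/andP[Hs /andP[Hx Ha]]].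
  move: Hu; rewrite IH => /andP[H1 H2]; rewrite mem_iota in Hy.
  rewrite /= ltnS H1 H2 andbT /=; move: Hy; rewrite add1n ltnS; done.
rewrite ltnS in Hs; exists (x, t); split.
- by rewrite mem_iota add1n ltnS.
- by rewrite IH Hs Ha.
- by [].
Qed.

Lemma uniq_cand N k : uniq (cand N k).
Proof.
elim: k => [|k IH] //=; apply/andP; split.
  by apply/negP => /allpairsP [[y u] [_ _]].
apply: allpairs_uniq => //; first exact: iota_uniq.
by move=> [x1 y1] [x2 y2] _ _ /= [-> ->].
Qed.

Lemma big_bij (T : eqType) (l1 l2 : seq T) (P Q : pred T) (f : T -> T) (w1 w2 : T -> nat) :
 uniq l1 -> uniq l2 ->
 (forall x, x \in l1 -> P x -> (f x \in l2) && Q (f x)) ->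
 (forall x y, x \in l1 -> P x -> y \in l1 -> P y -> f x = f y -> x = y) ->
 (forall y, y \in l2 -> Q y -> exists2 x, (x \in l1) && P x & y = f x) ->
 (forall x, x \in l1 -> P x -> w2 (f x) = w1 x) ->
 (\sum_(y <- l2 | Q y) w2 y = \sum_(x <- l1 | P x) w1 x)%N.
Proof.
move=> U1 U2 Hf Hi Hs Hw.
rewrite -big_filter -[RHS]big_filter.
have pe : perm_eq (filter Q l2) (map f (filter P l1)).
  apply: uniq_perm; first exact: filter_uniq.
    rewrite map_inj_in_uniq ?filter_uniq //.
    move=> x y; rewrite !mem_filter => /andP[px lx] /andP[py ly]; exact: Hi.
  move=> y; rewrite mem_filter; apply/andP/mapP.
    move=> [qy ly]; have [x /andP[lx px] ->] := Hs y ly qy.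
    by exists x => //; rewrite mem_filter px.
  move=> [x]; rewrite mem_filter => /andP[px lx] ->.
  by have /andP[-> ->] := Hf x lx px.
rewrite (perm_big _ pe) big_map; apply: eq_big_seq => x.
by rewrite mem_filter => /andP[px lx]; apply: Hw.
Qed.

Lemma big_bijS (l1 l2 : seq (seq nat)) (P Q : pred (seq nat)) (f : seq nat -> seq nat) (w1 w2 : seq nat -> nat) :
 uniq l1 -> uniq l2 ->
 (forall x : seq nat, x \in l1 -> P x -> (f x \in l2) && Q (f x)) ->
 (forall x y : seq nat, x \in l1 -> P x -> y \in l1 -> P y -> f x = f y -> x = y) ->
 (forall y : seq nat, y \in l2 -> Q y -> exists2 x, (x \in l1) && P x & y = f x) ->
 (forall x : seq nat, x \in l1 -> P x -> w2 (f x) = w1 x) ->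
 (\sum_(y <- l2 | Q y) w2 y = \sum_(x <- l1 | P x) w1 x)%N.
Proof. exact: big_bij. Qed.

Lemma part_cons x t : is_partition (x :: t) = [&& path geq x t, 0 < x & all (fun y => 0 < y) t].
Proof. by rewrite /is_partition /=; case: (path _ _ _). Qed.

Lemma path_geq_all x t : path geq x t -> all (fun y => y <= x) t.
Proof.
move=> H; apply: (order_path_min _ H) => y z u /= H1 H2; exact: leq_trans H2 H1.
Qed.

Lemma path_geq_mono x y t : y <= x -> path geq y t -> path geq x t.
Proof. by case: t => //= z t Hyx /andP[Hzy ->]; rewrite andbT (leq_trans Hzy). Qed.

Lemma largest_part s : is_partition s -> largest s = head 0 s.
Proof.
case: s => // x t; rewrite part_cons => /and3P[Hp _ _].
rewrite /largest /=; apply/maxn_idPl.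
have := path_geq_all _ _ Hp; elim: t {Hp} => //= y t IH /andP[Hy Ha].
by rewrite geq_max Hy IH.
Qed.

Lemma perim_cons x t : is_partition (x :: t) -> perimeter (x :: t) = x + size t.
Proof. by move=> H; rewrite /perimeter largest_part //= /nparts /=; lia. Qed.

Lemma part_in_cand s N : is_partition s -> perimeter s <= N -> s \in cand N N.
Proof.
case: s => [|x t] H; first by rewrite mem_cand.
rewrite perim_cons // => HN; rewrite mem_cand; move: H; rewrite part_cons => /and3P[Hp Hx Ht].
apply/andP; split; first by rewrite /=; lia.
rewrite /= Hx /=; apply/andP; split; first lia.
have := path_geq_all _ _ Hp; elim: t {Hp} Ht HN => //= y t IH /andP[Hy Ht] HN /andP[Hyx Ha].
rewrite Hy /=; apply/andP; split; first lia.
by apply: IH => //; lia.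
Qed.

Lemma mod_gap k x y : x %% k.+1 = y %% k.+1 -> y < x -> y + k.+1 <= x.
Proof.
move=> He Hl; have := eqn_mod_dvd k.+1 (ltnW Hl); rewrite He eqxx => /esym Hd.
have := dvdn_leq _ Hd; rewrite subn_gt0 => /(_ Hl); lia.
Qed.

Lemma part_behead x t : is_partition (x :: t) -> is_partition t.
Proof.
rewrite part_cons; case: t => // z t /and3P[/= /andP[_ Hp] _ /andP[Hz Ha]].
by rewrite part_cons Hp Hz Ha.
Qed.

Lemma path_geq_head x y t : path geq x t -> head 0 t <= y -> path geq y t.
Proof. by case: t => //= z t /andP[_ ->] ->. Qed.

Lemma part_newhead x y t : is_partition (x :: t) -> head 0 t <= y -> 0 < y -> is_partition (y :: t).
Proof.
rewrite !part_cons => /and3P[Hp _ Ha] Hh Hy.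
by rewrite Hy Ha (path_geq_head _ _ _ Hp Hh).
Qed.

Lemma part_head_le x t : is_partition (x :: t) -> head 0 t <= x.
Proof. by rewrite part_cons; case: t => //= z t /andP[/andP[]]. Qed.

Lemma part_head_pos x t : is_partition (x :: t) -> 0 < x.
Proof. by rewrite part_cons => /and3P[]. Qed.

Lemma part_head_pos2 x z t : is_partition (x :: z :: t) -> 0 < z.
Proof. by move/part_behead/part_head_pos. Qed.

Lemma part_dup y t : is_partition (y :: t) -> is_partition [:: y, y & t].
Proof. by rewrite !part_cons /= leqnn => /and3P[-> -> ->]; rewrite !andbT. Qed.

Definition PF d b n s := [&& is_partition s, perimeter s == n & all (fun x => x %% d.+1 == b %% d.+1) s].
Definition SF d b n (w : seq nat -> nat) := (\sum_(s <- cand n n | PF d b n s && (s != [::])) w s)%N.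
Definition dup2 (s : seq nat) := if s is x :: y :: _ then x == y else false.

Lemma PF_cons d b n x t : PF d b n (x :: t) =
  [&& is_partition (x :: t), x + size t == n, x %% d.+1 == b %% d.+1 & all (fun y => y %% d.+1 == b %% d.+1) t].
Proof.
rewrite /PF; case H: (is_partition (x :: t)) => //=.
by rewrite perim_cons.
Qed.

Lemma PF_in_cand d b n s : PF d b n s -> s \in cand n n.
Proof. by case/and3P => Hp /eqP <- _; apply: part_in_cand. Qed.

Arguments PF_in_cand {d b n s}.

Lemma pieceE d b m w : 0 < b ->
  (\sum_(s <- cand m.+1 m.+1 | ((PF d b m.+1 s && (s != [::])) && ~~ dup2 s) && (s == [:: b])) w s
   = (b == m.+1) * w [:: b])%N.
Proof.
move=> Hb.
rewrite (@big_bijS [:: [:: b]] _ (fun _ => b == m.+1) _ id w w).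
- by rewrite big_cons big_nil; case: (b == m.+1); rewrite ?mul1n ?mul0n ?addn0.
- by [].
- exact: uniq_cand.
- move=> x; rewrite inE => /eqP -> /eqP Hbm; rewrite -Hbm mem_cand PF_cons part_cons /= Hb eqxx addn0 leqnn /=.
  by rewrite !eqxx.
- by move=> x y _ _ _ _.
- move=> y _; rewrite -andbA => /and3P[/andP[Hp _] _ /eqP Hy]; subst y.
  exists [:: b] => //; rewrite inE eqxx /=.
  by move: Hp; rewrite PF_cons /= addn0 => /and3P[_ -> _].
- by [].
Qed.

Lemma pieceA d b m w :
  (\sum_(s <- cand m.+1 m.+1 | (PF d b m.+1 s && (s != [::])) && dup2 s) w s
   = SF d b m (fun t => w (head 0 t :: t)))%N.
Proof.
rewrite /SF (@big_bijS (cand m m) _ (fun t => PF d b m t && (t != [::])) _ (fun t => head 0 t :: t) (fun t => w (head 0 t :: t)) w) //.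
- exact: uniq_cand.
- exact: uniq_cand.
- move=> [|y t] _ /andP[Hq Hn]; first by rewrite eqxx in Hn.
  move: Hq; rewrite PF_cons => /and4P[Hp /eqP Hs Hr Ha].
  have HQ : PF d b m.+1 [:: y, y & t].
    by rewrite PF_cons (part_dup _ _ Hp) /= Hr Ha; apply/eqP; lia.
  by rewrite (PF_in_cand HQ) HQ /= eqxx.
- by move=> x y _ _ _ _ [].
- move=> [|x [|z t]] _ /andP[/andP[Hq _] Hd]; try by []. move/eqP: Hd => Exz; subst z.
  move: Hq; rewrite PF_cons => /and4P[Hp /eqP Hs Hr /= /andP[Hrz Ha]]. exists (x :: t) => //.
  have HQ : PF d b m (x :: t).
    by rewrite PF_cons (part_behead _ _ Hp) Hr Ha /=; apply/eqP; move: Hs => /=; lia.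
  by rewrite (PF_in_cand HQ) HQ.
Qed.

Lemma gapB d b m x t : 0 < b <= d.+1 -> PF d b m (x :: t) -> ~~ dup2 (x :: t) -> x :: t != [:: b] ->
  head 0 t + d.+1 <= x /\ d.+2 <= x.
Proof.
move=> /andP[Hb0 Hbd]; rewrite PF_cons => /and4P[Hp _ Hr Ha].
case: t Hp Ha => [|z t] Hp Ha /= Hd Hne.
  have Hx := part_head_pos _ _ Hp.
  have Hxb : x != b by apply: contraNneq Hne => ->.
  case: (ltngtP x b) => Hl; last by rewrite Hl eqxx in Hxb.
    exfalso; move/eqP: Hr; rewrite (modn_small (leq_trans Hl Hbd)).
    case: (ltngtP b d.+1) => Hb'.
    - by rewrite modn_small //; lia.
    - lia.
    - by rewrite Hb' modnn; lia.
  have := mod_gap _ _ _ (eqP Hr) Hl; lia.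
have Hz := part_head_pos2 _ _ _ Hp.
have Hzx := part_head_le _ _ Hp; rewrite /= in Hzx.
move: Ha => /= /andP[Hrz _].
have Hl : z < x by rewrite ltn_neqAle Hzx andbT eq_sym.
have := mod_gap _ _ _ (etrans (eqP Hr) (esym (eqP Hrz))) Hl; lia.
Qed.

Lemma pieceB d b m w : 0 < b <= d.+1 ->
 (\sum_(s <- cand m.+1 m.+1 | ((PF d b m.+1 s && (s != [::])) && ~~ dup2 s) && (s != [:: b])) w s
  = if d <= m then SF d b (m - d) (fun t => w ((head 0 t + d.+1) :: behead t)) else 0)%N.
Proof.
move=> Hb.
case: (leqP d m) => Hdm; last first.
  rewrite big_pred0 // => -[|x t]; first by rewrite andbF.
  apply/negP => /andP[/andP[/andP[Hq _] Hd] Hn].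
  have [_ H2] := gapB _ _ _ _ _ Hb Hq Hd Hn.
  move: Hq; rewrite PF_cons => /and4P[_ /eqP Hs _ _]; lia.
rewrite /SF (@big_bijS (cand (m - d) (m - d)) _ (fun t => PF d b (m - d) t && (t != [::])) _
   (fun t => (head 0 t + d.+1) :: behead t) (fun t => w ((head 0 t + d.+1) :: behead t)) w) //.
- exact: uniq_cand.
- exact: uniq_cand.
- move=> [|y t] _ /andP[Hq Hn]; first by rewrite eqxx in Hn.
  move: Hq; rewrite PF_cons => /and4P[Hp /eqP Hs Hr Ha] /=.
  have Hy := part_head_pos _ _ Hp.
  have Hh := part_head_le _ _ Hp.
  have HQ : PF d b m.+1 ((y + d.+1) :: t).
    rewrite PF_cons Ha modnDr Hr andbT andbT.
    rewrite (part_newhead y) //; last by rewrite addn_gt0 Hy.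
      by apply/eqP; lia.
    by rewrite /=; lia.
  rewrite (PF_in_cand HQ) HQ /=.
  apply/andP; split.
    by case: t {Hp Hs Ha HQ Hn} Hh => //= z t Hz; apply/negP => /eqP E; lia.
  apply/negP => /eqP [E1 E2]; subst t; case/andP: Hb => _; lia.
- move=> [|x1 t1] [|x2 t2] _ /andP[_ H1] _ /andP[_ H2] //= [E1 ->].
  by congr (_ :: _); lia.
- move=> [|x t] _ /andP[/andP[/andP[Hq _] Hd] Hn]; first by [].
  have [G1 G2] := gapB _ _ _ _ _ Hb Hq Hd Hn.
  move: Hq; rewrite PF_cons => /and4P[Hp /eqP Hs Hr Ha].
  exists ((x - d.+1) :: t); last by rewrite /=; congr (_ :: _); lia.
  have HQ : PF d b (m - d) ((x - d.+1) :: t).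
    rewrite PF_cons Ha andbT.
    have -> : (x - d.+1) %% d.+1 = x %% d.+1.
      by rewrite -(modnDr (x - d.+1)) subnK //; lia.
    rewrite Hr andbT (part_newhead x) //; last by lia.
      by apply/eqP; lia.
    by lia.
  by rewrite (PF_in_cand HQ) HQ.
Qed.

Lemma SF_rec d b m w : 0 < b <= d.+1 ->
 SF d b m.+1 w = ((b == m.+1) * w [:: b] + SF d b m (fun t => w (head 0 t :: t)) +
   (if d <= m then SF d b (m - d) (fun t => w ((head 0 t + d.+1) :: behead t)) else 0))%N.
Proof.
move=> Hb; rewrite {1}/SF (bigID dup2) /= pieceA (bigID (fun s => s == [:: b])) /=.
rewrite pieceE ?pieceB //; last by case/andP: Hb.
by rewrite addnA [X in X + _]addnC.
Qed.

Definition fz d b n := SF d b n (fun _ => 1%N).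
Definition la d b n := SF d b n size.

Lemma SF0 d b w : SF d b 0 w = 0%N.
Proof. by rewrite /SF /= big_cons big_nil andbF. Qed.

Lemma fz_rec d b m : 0 < b <= d.+1 ->
  fz d b m.+1 = ((b == m.+1) + fz d b m + (if d <= m then fz d b (m - d) else 0))%N.
Proof. by move=> Hb; rewrite /fz SF_rec // muln1. Qed.

Lemma la_rec d b m : 0 < b <= d.+1 ->
  la d b m.+1 = ((b == m.+1) + (la d b m + fz d b m) + (if d <= m then la d b (m - d) else 0))%N.
Proof.
move=> Hb; rewrite /la SF_rec // muln1.
congr (_ + _ + _)%N.
  by rewrite /SF /fz /SF -big_split /=; apply: eq_bigr => i _; rewrite addn1.
case: ifP => // _; rewrite /SF; apply: eq_bigr => -[|x t] //.
by rewrite andbF.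
Qed.

Definition PH d a n s := [&& is_partition s, perimeter s == n, d_distinct d s & all (fun x => a <= x) s].
Definition SH d a n (w : seq nat -> nat) := (\sum_(s <- cand n n | PH d a n s && (s != [::])) w s)%N.
Definition dupH d (s : seq nat) := if s is x :: y :: _ then x == y + d else false.

Lemma dd_sorted d s : d_distinct d s = sorted (fun x y => d + y <= x) s.
Proof.
rewrite /d_distinct sorted_pairwise //.
move=> y x z /= H1 H2; lia.
Qed.

Lemma dd_cons2 d x z t : d_distinct d [:: x, z & t] = (d + z <= x) && d_distinct d (z :: t).
Proof. by rewrite !dd_sorted. Qed.

Lemma dd_one d x : d_distinct d [:: x].
Proof. by rewrite dd_sorted. Qed.

Lemma dd_newhead d x y t : d_distinct d (x :: t) -> (if t is z :: _ then d + z <= y else true) ->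
  d_distinct d (y :: t).
Proof. by case: t => [|z t]; rewrite ?dd_one // !dd_cons2 => /andP[_ ->] ->. Qed.

Lemma dd_behead d x t : d_distinct d (x :: t) -> d_distinct d t.
Proof. by case: t => [|z t] //; rewrite dd_cons2 => /andP[]. Qed.

Lemma part_prepend x y t : is_partition (y :: t) -> y <= x -> is_partition [:: x, y & t].
Proof.
rewrite !part_cons /= => /and3P[-> Hy ->] Hyx; rewrite Hyx Hy /= andbT; lia.
Qed.

Lemma PH_cons d a n x t : PH d a n (x :: t) =
  [&& is_partition (x :: t), x + size t == n, d_distinct d (x :: t), a <= x & all (fun y => a <= y) t].
Proof.
rewrite /PH; case H: (is_partition (x :: t)) => //=.
by rewrite perim_cons.
Qed.

Lemma PH_in_cand d a n s : PH d a n s -> s \in cand n n.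
Proof. by case/and4P => Hp /eqP <- _ _; apply: part_in_cand. Qed.
Arguments PH_in_cand {d a n s}.

Lemma pieceEH d a m w : 0 < a ->
  (\sum_(s <- cand m.+1 m.+1 | ((PH d a m.+1 s && (s != [::])) && ~~ dupH d s) && (s == [:: a])) w s
   = (a == m.+1) * w [:: a])%N.
Proof.
move=> Ha.
rewrite (@big_bijS [:: [:: a]] _ (fun _ => a == m.+1) _ id w w).
- by rewrite big_cons big_nil; case: (a == m.+1); rewrite ?mul1n ?mul0n ?addn0.
- by [].
- exact: uniq_cand.
- move=> x; rewrite inE => /eqP -> /eqP Hbm.
  have HQ : PH d a m.+1 [:: a].
    by rewrite PH_cons dd_one part_cons /= Ha leqnn addn0 Hbm eqxx.
  by rewrite (PH_in_cand HQ) HQ /= eqxx.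
- by move=> x y _ _ _ _.
- move=> y _ /andP[/andP[/andP[Hp _] _] /eqP Hy]; subst y.
  exists [:: a] => //; rewrite inE eqxx /=.
  by move: Hp; rewrite PH_cons /= addn0 => /and3P[_ -> _].
- by [].
Qed.

Lemma pieceAH d a m w : 0 < a ->
  (\sum_(s <- cand m.+1 m.+1 | (PH d a m.+1 s && (s != [::])) && dupH d s) w s
   = if d <= m then SH d a (m - d) (fun t => w ((head 0 t + d) :: t)) else 0)%N.
Proof.
move=> Ha.
case: (leqP d m) => Hdm; last first.
  rewrite big_pred0 // => -[|x [|z t]]; rewrite ?andbF //.
  apply/negP => /andP[/andP[Hq _] /eqP Hd].
  have Hz := part_head_pos2 _ _ _ (proj1 (andP Hq)).
  move: Hq; rewrite PH_cons => /and5P[_ /eqP Hs _ _ _] /=; move: Hs => /=; lia.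
rewrite /SH (@big_bijS (cand (m - d) (m - d)) _ (fun t => PH d a (m - d) t && (t != [::])) _
   (fun t => (head 0 t + d) :: t) (fun t => w ((head 0 t + d) :: t)) w) //.
- exact: uniq_cand.
- exact: uniq_cand.
- move=> [|y t] _ /andP[Hq Hn]; first by rewrite eqxx in Hn.
  move: Hq; rewrite PH_cons => /and5P[Hp /eqP Hs Hd Hay Ha'] /=.
  have HQ : PH d a m.+1 [:: y + d, y & t].
    rewrite PH_cons (part_prepend _ _ _ Hp) ?leq_addr // dd_cons2 Hd /= Hay Ha' andbT.
    apply/andP; split; first by apply/eqP; lia.
    apply/andP; split; lia.
  by rewrite (PH_in_cand HQ) HQ /= eqxx.
- by move=> x y _ _ _ _ [].
- move=> [|x [|z t]] _ /andP[/andP[Hq _] Hd]; try by [].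
  move/eqP: Hd => Exz; subst x.
  move: Hq; rewrite PH_cons => /and5P[Hp /eqP Hs Hd Hay /= /andP[Haz Ha']].
  exists (z :: t) => //.
  have HQ : PH d a (m - d) (z :: t).
    rewrite PH_cons (part_behead _ _ Hp) (dd_behead _ _ _ Hd) Haz Ha' /= andbT.
    by apply/eqP; move: Hs => /=; lia.
  by rewrite (PH_in_cand HQ) HQ.
Qed.

Lemma gapH d a m x t : PH d a m (x :: t) -> ~~ dupH d (x :: t) -> x :: t != [:: a] ->
  a < x /\ (if t is z :: _ then d + z < x else true).
Proof.
rewrite PH_cons => /and5P[Hp _ Hd Hax Ha].
case: t Hp Hd Ha => [|z t] Hp Hd Ha /= Hdu Hne.
  split => //; rewrite ltn_neqAle Hax andbT; apply: contraNneq Hne => ->; done.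
move: Hd; rewrite dd_cons2 => /andP[Hdz _]; move: Ha => /= /andP[Haz _].
have : d + z < x by rewrite ltn_neqAle Hdz andbT; apply: contraNneq Hdu => <-; rewrite addnC.
move=> H; split => //; lia.
Qed.

Lemma pieceBH d a m w : 0 < a ->
 (\sum_(s <- cand m.+1 m.+1 | ((PH d a m.+1 s && (s != [::])) && ~~ dupH d s) && (s != [:: a])) w s
  = SH d a m (fun t => w ((head 0 t + 1) :: behead t)))%N.
Proof.
move=> Ha0.
rewrite /SH (@big_bijS (cand m m) _ (fun t => PH d a m t && (t != [::])) _
   (fun t => (head 0 t + 1) :: behead t) (fun t => w ((head 0 t + 1) :: behead t)) w) //.
- exact: uniq_cand.
- exact: uniq_cand.
- move=> [|y t] _ /andP[Hq Hn]; first by rewrite eqxx in Hn.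
  move: Hq; rewrite PH_cons => /and5P[Hp /eqP Hs Hd Hay Ha] /=.
  have Hh := part_head_le _ _ Hp.
  have HQ : PH d a m.+1 ((y + 1) :: t).
    rewrite PH_cons Ha andbT (part_newhead y) //; last by lia.
    - rewrite (dd_newhead _ _ _ _ Hd); last first.
        by case: t {Hp Hs Hn Ha Hh} Hd => // z t; rewrite dd_cons2 => /andP[H _]; lia.
      by apply/andP; split; [apply/eqP; lia | lia].
    - by rewrite /=; lia.
  rewrite (PH_in_cand HQ) HQ /=.
  apply/andP; split.
    case: t {Hp Hs Ha HQ Hn Hh} Hd => // z t; rewrite dd_cons2 => /andP[H _] /=.
    by apply/negP => /eqP E; lia.
  by apply/negP => /eqP [E1 E2]; lia.
- move=> [|x1 t1] [|x2 t2] _ /andP[_ H1] _ /andP[_ H2] //= [E1 ->].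
  by congr (_ :: _); lia.
- move=> [|x t] _ /andP[/andP[/andP[Hq _] Hd] Hn]; first by [].
  have [G1 G2] := gapH _ _ _ _ _ Hq Hd Hn.
  move: Hq; rewrite PH_cons => /and5P[Hp /eqP Hs Hdd Hax Ha].
  exists ((x - 1) :: t); last by rewrite /=; congr (_ :: _); lia.
  have HQ : PH d a m ((x - 1) :: t).
    rewrite PH_cons Ha andbT (part_newhead x) //; last by lia.
    - rewrite (dd_newhead _ _ _ _ Hdd); last by case: t {Hp Hs Ha Hn Hdd Hd} G2 => // z t; lia.
      by apply/andP; split; [apply/eqP; lia | lia].
    - by case: t {Hp Hs Ha Hn Hdd Hd} G2 => //= z t; lia.
  by rewrite (PH_in_cand HQ) HQ.
Qed.

Lemma SH_rec d a m w : 0 < a ->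
 SH d a m.+1 w = ((a == m.+1) * w [:: a] +
   (if d <= m then SH d a (m - d) (fun t => w ((head 0 t + d) :: t)) else 0) +
   SH d a m (fun t => w ((head 0 t + 1) :: behead t)))%N.
Proof.
move=> Ha; rewrite {1}/SH (bigID (dupH d)) /= pieceAH // (bigID (fun s => s == [:: a])) /=.
rewrite pieceEH ?pieceBH //.
by rewrite addnA [X in X + _]addnC.
Qed.

Definition hz d a n := SH d a n (fun _ => 1%N).
Definition hl d a n := SH d a n size.

Lemma SH0 d a w : SH d a 0 w = 0%N.
Proof. by rewrite /SH /= big_cons big_nil andbF. Qed.

Lemma hz_rec d a m : 0 < a ->
  hz d a m.+1 = ((a == m.+1) + (if d <= m then hz d a (m - d) else 0) + hz d a m)%N.
Proof. by move=> Ha; rewrite /hz SH_rec // muln1. Qed.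

Lemma hl_rec d a m : 0 < a ->
  hl d a m.+1 = ((a == m.+1) + (if d <= m then hl d a (m - d) + hz d a (m - d) else 0) + hl d a m)%N.
Proof.
move=> Ha; rewrite /hl SH_rec // muln1.
congr (_ + _ + _)%N.
  case: ifP => // _.
  by rewrite /SH /hz /SH -big_split /=; apply: eq_bigr => i _; rewrite addn1.
rewrite /SH; apply: eq_bigr => -[|x t] //.
by rewrite andbF.
Qed.
Import GRing.Theory.
Local Open Scope ring_scope.

Definition conv (u g : nat -> int) (n : nat) : int := \sum_(0 <= k < n.+1) u (n - k)%N * g k.

Lemma sum_ind (u : nat -> int) m d :
  \sum_(0 <= k < m.+1) u (m - k)%N * (k == d)%:R = if (d <= m)%N then u (m - d)%N else 0.
Proof.
rewrite big_mkord.
rewrite (eq_bigr (fun k : 'I_m.+1 => if (k == d :> nat) then u (m - k)%N else 0)); last first.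
  by move=> k _; case: eqP => _; rewrite ?mulr1 ?mulr0.
rewrite -big_mkcond (big_ord1_eq _ (fun k => u (m - k)%N)) ltnS.
by case: ifP.
Qed.

Lemma sum_shift (u g : nat -> int) m d :
  \sum_(0 <= k < m.+1) u (m - k)%N * (if (d <= k)%N then g (k - d)%N else 0)
  = if (d <= m)%N then conv u g (m - d) else 0.
Proof.
case: (leqP d m) => Hdm.
  rewrite (@big_cat_nat _ _ _ d) //=; last by lia.
  rewrite big_nat_cond big1 ?add0r; last first.
    by move=> k /andP[/andP[_ Hk] _]; rewrite leqNgt Hk mulr0.
  rewrite -{1}(add0n d) big_addn /conv.
  have -> : (m.+1 - d = (m - d).+1)%N by lia.
  apply: eq_big_nat => k /andP[_ Hk].
  rewrite leq_addl addnK; congr (u _ * _); lia.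
rewrite big_nat_cond big1 // => k /andP[/andP[_ Hk] _].
have -> : (d <= k)%N = false by lia.
by rewrite mulr0.
Qed.

Lemma conv_rec (u g : nat -> int) d :
  g 0%N = 0 ->
  (forall m, g m.+1 = (m == 0%N)%:R - (m == d)%:R + g m + (if (d <= m)%N then g (m - d)%N else 0)) ->
  forall m, conv u g m.+1 = conv u g m + u m + (if (d <= m)%N then conv u g (m - d) - u (m - d)%N else 0).
Proof.
move=> g0 grec m.
rewrite /conv big_nat_recl // g0 mulr0 add0r.
under eq_big_nat => k Hk do rewrite subSS grec !mulrDr mulrN.
rewrite !big_split /= sumrN !sum_ind sum_shift leq0n subn0.
by case: ifP => _; rewrite /conv; ring.
Qed.

Lemma hz_fz d a : (0 < a <= d.+1)%N -> forall n, hz d a n = fz d a n.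
Proof.
move=> Ha n; elim: n {-2}n (leqnn n) => [|N IH] n Hn.
  by move: Hn; rewrite leqn0 => /eqP ->; rewrite /hz /fz SH0 SF0.
case: n Hn => [|m] Hm; first by rewrite /hz /fz SH0 SF0.
rewrite hz_rec ?fz_rec //; last by case/andP: Ha.
rewrite !IH //; try lia.
Qed.

Section Main.
Variables d a : nat.
Hypothesis Ha : (0 < a <= d.+1)%N.

Let u n : int := (fz d a n)%:Z.
Let g n : int := (fz d 1 n)%:Z - (fz d d.+1 n)%:Z.
Let D n : int := (la d a n)%:Z - (hl d a n)%:Z.

Lemma g0 : g 0%N = 0.
Proof. by rewrite /g /fz !SF0 subrr. Qed.

Lemma grec m : g m.+1 = (m == 0%N)%:R - (m == d)%:R + g m + (if (d <= m)%N then g (m - d)%N else 0).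
Proof.
rewrite /g !fz_rec //; last by rewrite leqnn.
rewrite eqSS eqSS [(d == m)]eq_sym.
rewrite [(0%N == m)]eq_sym; case: (m == 0%N); case: (m == d); case: ifP => _; rewrite !PoszD /=; ring.
Qed.

Lemma Drec m : D m.+1 = D m + u m + (if (d <= m)%N then D (m - d)%N - u (m - d)%N else 0).
Proof.
rewrite /D /u la_rec // hl_rec; last by case/andP: Ha.
rewrite !hz_fz //.
case: ifP => _; rewrite !PoszD; ring.
Qed.

Lemma D_conv n : D n = conv u g n.
Proof.
elim: n {-2}n (leqnn n) => [|N IH] n Hn.
  move: Hn; rewrite leqn0 => /eqP ->.
  by rewrite /D /la /hl SF0 SH0 /conv big_nat1 g0 mulr0.
case: n Hn => [|m] Hm.
  by rewrite /D /la /hl SF0 SH0 /conv big_nat1 g0 mulr0.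
rewrite Drec (conv_rec u g d g0 grec) !IH //; lia.
Qed.

End Main.

Lemma PF_ne d b n s : (0 < n)%N -> (PF d b n s && (s != [::])) = PF d b n s.
Proof. by move=> Hn; case: s => [|x t]; rewrite ?andbT // /PF /perimeter /= andbF; case: n Hn. Qed.

Lemma PH_ne d a n s : (0 < n)%N -> (PH d a n s && (s != [::])) = PH d a n s.
Proof. by move=> Hn; case: s => [|x t]; rewrite ?andbT // /PH /perimeter /= andbF; case: n Hn. Qed.

Lemma fcount_fz d b n : (0 < n)%N -> fcount d b n = fz d b n.
Proof.
move=> Hn; rewrite /fcount /Fset size_filter -sum1_count /fz /SF.
by apply: eq_bigl => s; rewrite PF_ne.
Qed.

Theorem theorem1p2 (d n a : nat) :
  (1 <= d)%N -> (1 <= n)%N -> (1 <= a <= d.+1)%N ->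
  ((\sum_(s <- Fset d a n) nparts s)%N%:Z - (\sum_(s <- Hset d a n) nparts s)%N%:Z
   : int)
  = (\sum_(1 <= m < n) (fcount d a (n - m) * fcount d 1 m)%N%:Z)
    - (\sum_(1 <= m < n) (fcount d a (n - m) * fcount d d.+1 m)%N%:Z).
Proof.
move=> Hd Hn Ha.
have -> : (\sum_(s <- Fset d a n) nparts s)%N = la d a n.
  by rewrite /Fset big_filter /la /SF; apply: eq_bigl => s; rewrite PF_ne.
have -> : (\sum_(s <- Hset d a n) nparts s)%N = hl d a n.
  by rewrite /Hset big_filter /hl /SH; apply: eq_bigl => s; rewrite PH_ne.
rewrite (D_conv _ _ Ha) /conv big_ltn // big_nat_recr //= /fz SF0 subn0 subnn !SF0 subrr !mulr0 mul0r add0r addr0.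
rewrite -sumrB; apply: eq_big_nat => m /andP[H1 H2].
rewrite !fcount_fz //; last by lia.
by rewrite !PoszM mulrBr.
Qed.
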